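(* Let $A$ be a strongly AUF algebra and let $e\in A$ be a generating idempotent. Then the $A$-$(eAe)$ bimodule $Ae$ has a left coordinate system. In particular, $Ae$ is a projective right $eAe$-module.
   Context: All algebras are associative $\mathbb C$-algebras, not necessarily unital. An idempotent is an element $e$ with $e^2=e$. An algebra $A$ is AUF if there is a family $(e_i)_{i\in\mathfrak I}$ of mutually orthogonal idempotents with $\dim e_iAe_j<\infty$ and $A=\sum_{i,j}e_iAe_j$. A left $A$-module $M$ is quasicoherent if $\xi\in A\xi$ for all $\xi\in M$. Irreducible means nonzero with no nonzero proper submodules. An idempotent $e$ is generating if every irreducible quasicoherent left $A$-module is a quotient of $Ae$; $A$ is strongly AUF if it is AUF and has a generating idempotent. The algebra $eAe$ is unital with unit $e$. A left coordinate system of an $A$-$B$ bimodule $M$ ($B$ unital) is a family of right $B$-module maps $\alpha_i:B\to M$, $\check\alpha^i:M\to B$, $i\in I$, such that (a) for each $\xi\in M$, $\check\alpha^i(\xi)=0$ for all but finitely many $i$ and $\sum_i\alpha_i\check\alpha^i(\xi)=\xi$; (b) for each $x\in A$ (acting on $M$), $x\circ\alpha_i=0$ and $\check\alpha^i\circ x=0$ for all but finitely many $i$. *)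

(* Defs.v *)
(* Algebras are modelled as a C-vector space V (lmodType over
   C := R[i] for R : realType) with a bilinear associative multiplication
   [mul : V -> V -> V]; no unit is assumed. *)
From HB Require Import structures.
From mathcomp Require Import all_boot all_order all_algebra.
From mathcomp Require Import reals complex.
Set Implicit Arguments. Unset Strict Implicit. Unset Printing Implicit Defensive.
Import Order.TTheory GRing.Theory Num.Theory.
Local Open Scope ring_scope.

Section NUAlg.
Variable K : fieldType.
Variable V : lmodType K.
Variable mul : V -> V -> V.

Definition is_algebra : Prop :=
  (forall x y z, mul x (mul y z) = mul (mul x y) z) /\
  (forall x y z, mul (x + y) z = mul x z + mul y z) /\
  (forall x y z, mul x (y + z) = mul x y + mul x z) /\
  (forall (c : K) x y, mul (c *: x) y = c *: mul x y) /\
  (forall (c : K) x y, mul x (c *: y) = c *: mul x y).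

Definition idempotent (e : V) : Prop := mul e e = e.

Definition fin_dim (S : V -> Prop) : Prop :=
  exists s : seq V, forall v, S v ->
    exists c : 'I_(size s) -> K, v = \sum_(k < size s) c k *: s`_k.

Definition corner (e f : V) : V -> Prop := fun v => exists a, v = mul (mul e a) f.

Definition is_AUF : Prop :=
  exists (J : Type) (E : J -> V),
    (forall i, idempotent (E i)) /\
    (forall i j, i <> j -> mul (E i) (E j) = 0) /\
    (forall i j, fin_dim (corner (E i) (E j))) /\
    (forall a : V, exists (n : nat) (t : 'I_n -> (J * J * V)),
        (forall k, corner (E (t k).1.1) (E (t k).1.2) (t k).2) /\
        a = \sum_(k < n) (t k).2).

Definition left_module (M : lmodType K) (act : V -> M -> M) : Prop :=
  (forall x y m, act (mul x y) m = act x (act y m)) /\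
  (forall x y m, act (x + y) m = act x m + act y m) /\
  (forall x m n, act x (m + n) = act x m + act x n) /\
  (forall (c : K) x m, act (c *: x) m = c *: act x m) /\
  (forall (c : K) x m, act x (c *: m) = c *: act x m).

Definition quasicoherent (M : lmodType K) (act : V -> M -> M) : Prop :=
  forall m : M, exists x, act x m = m.

Definition submodule (M : lmodType K) (act : V -> M -> M) (N : M -> Prop) : Prop :=
  N 0 /\ (forall m n, N m -> N n -> N (m + n)) /\
  (forall (c : K) m, N m -> N (c *: m)) /\ (forall x m, N m -> N (act x m)).

Definition irreducible (M : lmodType K) (act : V -> M -> M) : Prop :=
  (exists m : M, m <> 0) /\
  forall N : M -> Prop, submodule act N ->
    (forall m, N m -> m = 0) \/ (forall m, N m).

Definition inAe (e a : V) : Prop := exists b, a = mul b e.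
Definition inB (e b : V) : Prop := exists a, b = mul (mul e a) e.

Definition quotient_of_Ae (e : V) (M : lmodType K) (act : V -> M -> M) : Prop :=
  exists f : V -> M,
    (forall a b, inAe e a -> inAe e b -> f (a + b) = f a + f b) /\
    (forall (c : K) a, inAe e a -> f (c *: a) = c *: f a) /\
    (forall x a, inAe e a -> f (mul x a) = act x (f a)) /\
    (forall m, exists a, inAe e a /\ f a = m).

Definition generating (e : V) : Prop :=
  idempotent e /\
  forall (M : lmodType K) (act : V -> M -> M),
    left_module act -> quasicoherent act -> irreducible act ->
    quotient_of_Ae e act.

Definition strongly_AUF : Prop := is_AUF /\ exists e, generating e.

Definition rmap_B_Ae (e : V) (f : V -> V) : Prop :=
  (forall b, inB e b -> inAe e (f b)) /\
  (forall b b', inB e b -> inB e b' -> f (b + b') = f b + f b') /\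
  (forall (c : K) b, inB e b -> f (c *: b) = c *: f b) /\
  (forall b b', inB e b -> inB e b' -> f (mul b b') = mul (f b) b').

Definition rmap_Ae_B (e : V) (g : V -> V) : Prop :=
  (forall xi, inAe e xi -> inB e (g xi)) /\
  (forall xi xi', inAe e xi -> inAe e xi' -> g (xi + xi') = g xi + g xi') /\
  (forall (c : K) xi, inAe e xi -> g (c *: xi) = c *: g xi) /\
  (forall xi b, inAe e xi -> inB e b -> g (mul xi b) = mul (g xi) b).

Definition left_coordinate_system (e : V) : Prop :=
  exists (I : eqType) (al ch : I -> V -> V),
    (forall i, rmap_B_Ae e (al i)) /\
    (forall i, rmap_Ae_B e (ch i)) /\
    (forall xi, inAe e xi -> exists s : seq I,
        uniq s /\ (forall i, i \notin s -> ch i xi = 0) /\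
        xi = \sum_(i <- s) al i (ch i xi)) /\
    (forall x : V, exists s : seq I, forall i, i \notin s ->
        (forall b, inB e b -> mul x (al i b) = 0) /\
        (forall xi, inAe e xi -> ch i (mul x xi) = 0)).

(* right (unital) eAe-modules, given by an action N -> V -> N constrained on eAe *)
Definition right_B_module (e : V) (N : lmodType K) (ract : N -> V -> N) : Prop :=
  (forall n, ract n e = n) /\
  (forall n b b', inB e b -> inB e b' -> ract n (mul b b') = ract (ract n b) b') /\
  (forall n b b', inB e b -> inB e b' -> ract n (b + b') = ract n b + ract n b') /\
  (forall n n' b, inB e b -> ract (n + n') b = ract n b + ract n' b) /\
  (forall (c : K) n b, inB e b -> ract (c *: n) b = c *: ract n b) /\
  (forall (c : K) n b, inB e b -> ract n (c *: b) = c *: ract n b).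

Definition right_B_hom (e : V) (N P : lmodType K)
    (ractN : N -> V -> N) (ractP : P -> V -> P) (g : N -> P) : Prop :=
  (forall n n', g (n + n') = g n + g n') /\
  (forall (c : K) n, g (c *: n) = c *: g n) /\
  (forall n b, inB e b -> g (ractN n b) = ractP (g n) b).

Definition right_B_hom_Ae (e : V) (P : lmodType K) (ractP : P -> V -> P)
    (h : V -> P) : Prop :=
  (forall xi xi', inAe e xi -> inAe e xi' -> h (xi + xi') = h xi + h xi') /\
  (forall (c : K) xi, inAe e xi -> h (c *: xi) = c *: h xi) /\
  (forall xi b, inAe e xi -> inB e b -> h (mul xi b) = ractP (h xi) b).

Definition projective_Ae (e : V) : Prop :=
  forall (N P : lmodType K) (ractN : N -> V -> N) (ractP : P -> V -> P),
    right_B_module e ractN -> right_B_module e ractP ->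
    forall g : N -> P, right_B_hom e ractN ractP g -> (forall p, exists n, g n = p) ->
    forall h : V -> P, right_B_hom_Ae e ractP h ->
    exists k : V -> N, right_B_hom_Ae e ractN k /\
      (forall xi, inAe e xi -> g (k xi) = h xi).

End NUAlg.

(* Main.v *)
Require Import Defs.
From HB Require Import structures.
From mathcomp Require Import all_boot all_order all_algebra.
From mathcomp Require Import reals complex.
From mathcomp Require Import boolp classical_sets.
From Stdlib Require Import Classical ClassicalEpsilon FunctionalExtensionality PropExtensionality.
Set Implicit Arguments. Unset Strict Implicit. Unset Printing Implicit Defensive.
Import Order.TTheory GRing.Theory Num.Theory.
Local Open Scope ring_scope.
Local Open Scope complex_scope.

Section Quot.
Context {K : fieldType} {V : lmodType K} (N : V -> Prop).

Definition Ncl (x : V) : Prop := forall P : V -> Prop, P 0 ->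
  (forall x y, P x -> P y -> P (x + y)) -> (forall (c : K) x, P x -> P (c *: x)) ->
  (forall y, N y -> P y) -> P x.

Lemma Ncl0 : Ncl 0. Proof. by move=> P. Qed.
Lemma NclD x y : Ncl x -> Ncl y -> Ncl (x + y).
Proof. move=> hx hy P h0 hD hZ hN; apply: (hD); [exact: hx P h0 hD hZ hN | exact: hy P h0 hD hZ hN]. Qed.
Lemma NclZ c x : Ncl x -> Ncl (c *: x).
Proof. move=> hx P h0 hD hZ hN; apply: (hZ); exact: hx P h0 hD hZ hN. Qed.
Lemma NclN x : Ncl x -> Ncl (- x).
Proof. by move=> h; rewrite -scaleN1r; apply: NclZ. Qed.
Lemma NclB x y : Ncl (x - y) -> Ncl (y - x).
Proof. by move=> h; rewrite -opprB; apply: NclN. Qed.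
Lemma NclT x y z : Ncl (x - y) -> Ncl (y - z) -> Ncl (x - z).
Proof. by move=> h1 h2; have := NclD h1 h2; rewrite addrA subrK. Qed.

Definition rep (x : V) : V := epsilon (inhabits 0) (fun y => Ncl (x - y)).
Lemma repP x : Ncl (x - rep x).
Proof. apply: (epsilon_spec (inhabits 0) (fun y => Ncl (x - y))); exists x; rewrite subrr; exact: Ncl0. Qed.
Lemma rep_eq x y : Ncl (x - y) -> rep x = rep y.
Proof.
move=> h; rewrite /rep; congr epsilon; apply: functional_extensionality => z.
apply: propositional_extensionality; split => hz.
- by apply: NclT hz; apply: NclB.
- exact: NclT h hz.
Qed.
Lemma rep_idem x : rep (rep x) = rep x.
Proof. by apply: rep_eq; apply: NclB; apply: repP. Qed.

Definition quot := {x : V | rep x == x}.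
HB.instance Definition _ := [isSub for (@proj1_sig V (fun x => rep x == x) : quot -> V)].
HB.instance Definition _ := [Choice of quot by <:].

Definition pi (x : V) : quot := exist _ (rep x) (introT eqP (rep_idem x)).
Lemma piK (m : quot) : pi (val m) = m.
Proof. apply: val_inj => /=; case: m => x /= /eqP; done. Qed.
Lemma pi_eq x y : Ncl (x - y) -> pi x = pi y.
Proof. by move=> h; apply: val_inj => /=; apply: rep_eq. Qed.
Lemma pi_eqP x y : pi x = pi y -> Ncl (x - y).
Proof.
move=> /(congr1 val) /= e.
have h1 := repP x; have h2 := NclB (repP y).
by have := NclT h1 (eq_ind_r (fun z => Ncl (z - y)) h2 e).
Qed.

Definition qzero : quot := pi 0.
Definition qadd (a b : quot) : quot := pi (val a + val b).
Definition qopp (a : quot) : quot := pi (- val a).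
Definition qscale (c : K) (a : quot) : quot := pi (c *: val a).

Lemma piD x y : pi (rep x + rep y) = pi (x + y).
Proof.
apply: pi_eq; have := NclD (NclB (repP x)) (NclB (repP y)).
by rewrite addrACA opprD.
Qed.

Lemma qaddE x y : qadd (pi x) (pi y) = pi (x + y).
Proof. exact: piD. Qed.
Lemma qoppE x : qopp (pi x) = pi (- x).
Proof. apply: pi_eq => /=; rewrite -opprD; apply: NclN; apply: NclB; apply: repP. Qed.
Lemma qscaleE c x : qscale c (pi x) = pi (c *: x).
Proof. apply: pi_eq => /=; rewrite -scalerBr; apply: NclZ; apply: NclB; apply: repP. Qed.

Lemma qaddA : associative qadd.
Proof. by move=> a b c; rewrite -[a]piK -[b]piK -[c]piK !qaddE addrA. Qed.
Lemma qaddC : commutative qadd.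
Proof. by move=> a b; rewrite -[a]piK -[b]piK !qaddE addrC. Qed.
Lemma qadd0 : left_id qzero qadd.
Proof. by move=> a; rewrite -[a]piK /qzero qaddE add0r. Qed.
Lemma qaddN : left_inverse qzero qopp qadd.
Proof. by move=> a; rewrite -[a]piK qoppE qaddE addNr. Qed.

HB.instance Definition _ := GRing.isZmodule.Build quot qaddA qaddC qadd0 qaddN.

Lemma addq (a b : quot) : a + b = qadd a b. Proof. by []. Qed.
Lemma qscaleA a b v : qscale a (qscale b v) = qscale (a * b) v.
Proof. by rewrite -[v]piK !qscaleE scalerA. Qed.
Lemma qscale1 : left_id 1 qscale.
Proof. by move=> v; rewrite -[v]piK qscaleE scale1r. Qed.
Lemma qscaleDr : right_distributive qscale +%R.
Proof. by move=> a u v; rewrite -[u]piK -[v]piK !addq qaddE !qscaleE qaddE scalerDr. Qed.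
Lemma qscaleDl v : {morph qscale^~ v : a b / a + b}.
Proof. by move=> a b; rewrite -[v]piK !addq !qscaleE qaddE scalerDl. Qed.

HB.instance Definition _ := GRing.Zmodule_isLmodule.Build K quot qscaleA qscale1 qscaleDr qscaleDl.

Lemma piD' x y : pi (x + y) = pi x + pi y.
Proof. by rewrite addq qaddE. Qed.
Lemma piZ c x : pi (c *: x) = c *: pi x.
Proof. by rewrite -qscaleE. Qed.
Lemma pi0 : pi 0 = 0.
Proof. by []. Qed.
Lemma pi_eq0 x : pi x = 0 -> Ncl x.
Proof. by rewrite -pi0 => /pi_eqP; rewrite subr0. Qed.
End Quot.

Local Open Scope classical_set_scope.
Section Alg.
Context {K : fieldType} {V : lmodType K} (mul : V -> V -> V).
Hypothesis Halg : is_algebra mul.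
Local Notation "x ** y" := (mul x y) (at level 40, left associativity).

Lemma mulA x y z : x ** (y ** z) = x ** y ** z. Proof. by case: Halg. Qed.
Lemma mulDl x y z : (x + y) ** z = x ** z + y ** z. Proof. by case: Halg => _ []. Qed.
Lemma mulDr x y z : x ** (y + z) = x ** y + x ** z. Proof. by case: Halg => _ [_ []]. Qed.
Lemma mulZl c x y : (c *: x) ** y = c *: (x ** y). Proof. by case: Halg => _ [_ [_ []]]. Qed.
Lemma mulZr c x y : x ** (c *: y) = c *: (x ** y). Proof. by case: Halg => _ [_ [_ []]]. Qed.
Lemma mul0l y : 0 ** y = 0. Proof. by rewrite -[X in X ** _](scale0r (0:V)) mulZl scale0r. Qed.
Lemma mul0r y : y ** 0 = 0. Proof. by rewrite -[X in _ ** X](scale0r (0:V)) mulZr scale0r. Qed.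
Lemma mulNl x y : (- x) ** y = - (x ** y). Proof. by rewrite -scaleN1r mulZl scaleN1r. Qed.
Lemma mulNr x y : x ** (- y) = - (x ** y). Proof. by rewrite -scaleN1r mulZr scaleN1r. Qed.
Lemma mulBl x y z : (x - y) ** z = x ** z - y ** z. Proof. by rewrite mulDl mulNl. Qed.
Lemma mulBr x y z : x ** (y - z) = x ** y - x ** z. Proof. by rewrite mulDr mulNr. Qed.
Lemma mul_suml (I : Type) (r : seq I) (F : I -> V) y :
  (\sum_(i <- r) F i) ** y = \sum_(i <- r) (F i ** y).
Proof. elim: r => [|i r IH]; first by rewrite !big_nil mul0l. by rewrite !big_cons mulDl IH. Qed.
Lemma mul_sumr (I : Type) (r : seq I) (F : I -> V) y :
  y ** (\sum_(i <- r) F i) = \sum_(i <- r) (y ** F i).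
Proof. elim: r => [|i r IH]; first by rewrite !big_nil mul0r. by rewrite !big_cons mulDr IH. Qed.

Section AUF.
Variables (J : Type) (E : J -> V).
Hypothesis Eidem : forall i, Defs.idempotent mul (E i).
Hypothesis Eorth : forall i j, i <> j -> E i ** E j = 0.
Hypothesis Edec : forall a : V, exists (n : nat) (t : 'I_n -> (J * J * V)),
        (forall k, corner mul (E (t k).1.1) (E (t k).1.2) (t k).2) /\
        a = \sum_(k < n) (t k).2.

Definition isE v := exists k, v = E k.

Lemma Eorth' v w : isE v -> isE w -> v != w -> v ** w = 0.
Proof.
move=> [i ->] [j ->] ne; apply: Eorth => eij; move: ne; by rewrite eij eqxx.
Qed.

Lemma isE_idem v : isE v -> v ** v = v.
Proof. by move=> [i ->]; apply: Eidem. Qed.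

Lemma corner_left v i j p : isE v -> corner mul (E i) (E j) p ->
  v ** p = if v == E i then p else 0.
Proof.
move=> hv [a ->]; case: eqP => [->|/eqP ne].
  by rewrite !mulA Eidem.
by rewrite !mulA (Eorth' hv) ?mul0l //; exists i.
Qed.

Lemma corner_right v i j p : isE v -> corner mul (E i) (E j) p ->
  p ** v = if v == E j then p else 0.
Proof.
move=> hv [a ->]; case: eqP => [->|/eqP ne].
  by rewrite -!mulA Eidem.
rewrite -mulA (Eorth' _ hv) ?mul0r //; first by exists j.
by rewrite eq_sym.
Qed.

Lemma left_dec a : exists S : seq V, [/\ uniq S, (forall v, v \in S -> isE v),
  a = \sum_(v <- S) v ** a & (forall v, isE v -> v \notin S -> v ** a = 0)].
Proof.
have [n [t [ht ->]]] := Edec a.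
set S := undup [seq E (t k).1.1 | k <- enum 'I_n].
have memS k : E (t k).1.1 \in S by rewrite mem_undup; apply/mapP; exists k; rewrite ?mem_enum.
exists S; split.
- exact: undup_uniq.
- by move=> v; rewrite mem_undup => /mapP [k _ ->]; exists (t k).1.1.
- rewrite (eq_bigr (fun v => \sum_(k < n) v ** (t k).2)); last by move=> v _; rewrite mul_sumr.
  rewrite exchange_big /=; apply: eq_bigr => k _.
  rewrite (bigD1_seq (E (t k).1.1)) ?undup_uniq //= (corner_left _ (ht k)); last by exists (t k).1.1.
  rewrite eqxx big1_seq ?addr0 // => v /andP [/negbTE nv vS].
  rewrite (corner_left _ (ht k)) ?nv //.
  by move: vS; rewrite mem_undup => /mapP [k' _ ->]; exists (t k').1.1.
- move=> v hv vS; rewrite mul_sumr big1 // => k _.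
  rewrite (corner_left _ (ht k)) //; case: eqP => // ev.
  by move: vS; rewrite ev memS.
Qed.

Lemma right_dec a : exists S : seq V, forall v, isE v -> v \notin S -> a ** v = 0.
Proof.
have [n [t [ht ->]]] := Edec a.
exists [seq E (t k).1.2 | k <- enum 'I_n] => v hv vS.
rewrite mul_suml big1 // => k _.
rewrite (corner_right _ (ht k)) //; case: eqP => // ev.
by move: vS; rewrite ev; move/mapP; case; exists k; rewrite ?mem_enum.
Qed.

Lemma left_unit a : exists y, y ** a = a.
Proof.
have [S [_ _ ha _]] := left_dec a.
by exists (\sum_(v <- S) v); rewrite mul_suml -ha.
Qed.

Variable e : V.
Hypothesis Hgen : generating mul e.

Definition Tset (z : V) := exists s : seq (V * V), z = \sum_(p <- s) p.1 ** e ** p.2.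

Lemma T0 : Tset 0. Proof. by exists [::]; rewrite big_nil. Qed.
Lemma TD x y : Tset x -> Tset y -> Tset (x + y).
Proof. by move=> [s1 ->] [s2 ->]; exists (s1 ++ s2); rewrite big_cat. Qed.
Lemma TZ c x : Tset x -> Tset (c *: x).
Proof.
move=> [s ->]; exists [seq (c *: p.1, p.2) | p <- s]; rewrite big_map scaler_sumr.
by apply: eq_bigr => p _ /=; rewrite !mulZl.
Qed.
Lemma TM a x : Tset x -> Tset (a ** x).
Proof.
move=> [s ->]; exists [seq (a ** p.1, p.2) | p <- s]; rewrite big_map mul_sumr.
by apply: eq_bigr => p _ /=; rewrite !mulA.
Qed.
Lemma TR a x : Tset x -> Tset (x ** a).
Proof.
move=> [s ->]; exists [seq (p.1, p.2 ** a) | p <- s]; rewrite big_map mul_suml.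
by apply: eq_bigr => p _ /=; rewrite !mulA.
Qed.
Lemma Te z : Tset (e ** z).
Proof.
exists [:: (e, z)]; rewrite big_cons big_nil addr0 /=.
by have [he _] := Hgen; rewrite he.
Qed.

Definition closedY (Y : V -> Prop) :=
  (forall x y, Y x -> Y y -> Y (x + y)) /\ (forall (c : K) x, Y x -> Y (c *: x)) /\
  (forall a x, Y x -> Y (a ** x)).

Lemma keyE k : Tset (E k).
Proof.
apply: NNPP => nT; set f := E k.
have hf : f ** f = f by apply: Eidem.
pose N0 z := exists t x, Tset t /\ z = t + (x - x ** f).
have N0T t : Tset t -> N0 t by move=> ht; exists t, 0; rewrite mul0l subr0 addr0.
have N0R x : N0 (x - x ** f) by exists 0, x; split; [exact: T0 | rewrite add0r].
have N00 : N0 0 by apply: N0T; apply: T0.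
have N0cl : closedY N0.
  split; [|split].
  - move=> _ _ [t1 [x1 [h1 ->]]] [t2 [x2 [h2 ->]]]; exists (t1 + t2), (x1 + x2); split.
      exact: TD.
    by rewrite mulDl opprD addrACA; congr (_ + _); rewrite addrACA.
  - move=> c _ [t [x [h ->]]]; exists (c *: t), (c *: x); split; first exact: TZ.
    by rewrite mulZl -scalerBr scalerDr.
  - move=> a _ [t [x [h ->]]]; exists (a ** t), (a ** x); split; first exact: TM.
    by rewrite mulDr mulBr mulA.
have N0f : ~ N0 f.
  move=> [t [x [ht ef]]]; apply: nT; suff : Tset (f ** f) by rewrite hf.
  rewrite {1}ef mulDl mulBl -mulA hf subrr addr0.
  exact: TR.
pose Pz (X : set V) := closedY (fun z => X z \/ N0 z) /\ ~ (X f \/ N0 f).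
have [A [[Acl Af] Amax]] : exists A, Pz A /\ forall B, A `<` B -> ~ Pz B.
  apply: Zorn_bigcup => F FP Ftot.
  have U1 z : (\bigcup_(X in F) X) z \/ N0 z -> N0 z \/ exists X, F X /\ X z.
    by case=> [[X FX Xz]|h]; [right; exists X | left].
  have U2 X z : F X -> X z \/ N0 z -> (\bigcup_(X in F) X) z \/ N0 z.
    by move=> FX [Xz|h]; [left; exists X | right].
  split; last first.
    case=> [[X FX Xf]|//]; have [_ hX] := FP X FX; apply: hX; by left.
  split; [|split].
  - move=> x y /U1 [hx|[X [FX Xx]]] /U1 [hy|[Y [FY Yy]]].
    + by right; apply: N0cl.1.
    + apply: (U2 Y) => //; have [[h _] _] := FP Y FY; apply: h; [right|left] => //.
    + apply: (U2 X) => //; have [[h _] _] := FP X FX; apply: h; [left|right] => //.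
    + have [XY|YX] := Ftot X Y FX FY.
        apply: (U2 Y) => //; have [[h _] _] := FP Y FY; apply: h; left => //; exact: XY.
      apply: (U2 X) => //; have [[h _] _] := FP X FX; apply: h; left => //; exact: YX.
  - move=> c x /U1 [hx|[X [FX Xx]]].
      by right; apply: N0cl.2.1.
    apply: (U2 X) => //; have [[_ [h _]] _] := FP X FX; apply: h; by left.
  - move=> a x /U1 [hx|[X [FX Xx]]].
      by right; apply: N0cl.2.2.
    apply: (U2 X) => //; have [[_ [_ h]] _] := FP X FX; apply: h; by left.
pose N z := A z \/ N0 z.
have Nf : ~ N f by [].
have N0N z : N0 z -> N z by right.
have ND x y : N x -> N y -> N (x + y) by apply: Acl.1.
have NZ c x : N x -> N (c *: x) by apply: Acl.2.1.
have NM a x : N x -> N (a ** x) by apply: Acl.2.2.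
have N_0 : N 0 by right.
have NclN z : Ncl N z -> N z.
  by move=> hz; apply: hz => //.
have NNcl z : N z -> Ncl N z by move=> hz P _ _ _; apply.
have NB x y : N (x - y) -> N (y - x).
  by move=> h; rewrite -opprB -scaleN1r; apply: NZ.
pose act (a : V) (m : quot N) : quot N := pi N (a ** val m).
have act_pi a x : act a (pi N x) = pi N (a ** x).
  apply: pi_eq; apply: NNcl; rewrite -mulBr; apply: NM; apply: NB; apply: NclN; exact: repP.
have pi0N x : N x -> pi N x = 0.
  by move=> hx; rewrite -pi0; apply: pi_eq; rewrite subr0; apply: NNcl.
have Hlm : left_module mul act.
  split; [|split; [|split; [|split]]].
  - by move=> x y m; rewrite -[m]piK !act_pi mulA.
  - by move=> x y m; rewrite -[m]piK !act_pi -piD' mulDl.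
  - by move=> x m n; rewrite -[m]piK -[n]piK -piD' !act_pi -piD' mulDr.
  - by move=> c x m; rewrite -[m]piK !act_pi -piZ mulZl.
  - by move=> c x m; rewrite -[m]piK -piZ !act_pi -piZ mulZr.
have Hqc : quasicoherent act.
  move=> m; rewrite -[m]piK; set x := val m.
  have [y hy] := left_unit (x ** f).
  exists y; rewrite act_pi; apply: pi_eq; apply: NNcl.
  have -> : y ** x - x = y ** (x - x ** f) + (x ** f - x).
    by rewrite mulBr hy addrA subrK.
  apply: ND; first by apply: NM; apply: N0N.
  by apply: NB; apply: N0N.
have Hirr : irreducible act.
  split.
    exists (pi N f) => h; apply: Nf; apply: NclN; exact: pi_eq0 h.
  move=> Ns [Ns0 [NsD [NsZ NsM]]].
  case: (classic (exists m, Ns m /\ m <> 0)); last first.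
    move=> hn; left => m hm; apply: NNPP => hm0; apply: hn; by exists m.
  move=> [m [Nsm m0]]; right => m'.
  move: Nsm m0; rewrite -[m]piK; set x := val m => Nsm m0.
  have nx : ~ N x by move=> hx; apply: m0; apply: pi0N.
  pose N' z := exists n a (c : K), N n /\ z = n + a ** x + c *: x.
  have N'N z : N z -> N' z by move=> hz; exists z, 0, 0; rewrite mul0l scale0r !addr0.
  have N'f : N' f.
    have : ~ Pz N'.
      apply: Amax; split.
        by move=> z hz; apply: N'N; left.
      move=> hsub; apply: nx; left; apply: hsub; exists 0, 0, 1.
      by rewrite mul0l scale1r !add0r.
    move=> hP; apply: NNPP => nf; apply: hP; split; last first.
      by case=> // /N0N /N'N.
    have N'cl : closedY N'.
      split; [|split].
      - move=> _ _ [n1 [a1 [c1 [h1 ->]]]] [n2 [a2 [c2 [h2 ->]]]].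
        exists (n1 + n2), (a1 + a2), (c1 + c2); split; first exact: ND.
        rewrite mulDl scalerDl -!addrA; congr (_ + _).
        by rewrite [RHS]addrCA; congr (_ + _); rewrite addrCA; congr (_ + _); exact: addrCA.
      - move=> c _ [n1 [a1 [c1 [h1 ->]]]]; exists (c *: n1), (c *: a1), (c * c1); split.
          exact: NZ.
        by rewrite !scalerDr mulZl scalerA.
      - move=> b _ [n1 [a1 [c1 [h1 ->]]]]; exists (b ** n1), (b ** a1 + c1 *: b), 0; split.
          exact: NM.
        by rewrite scale0r addr0 !mulDr mulA mulDl mulZl mulZr addrA.
    have [h1 [h2 h3]] := N'cl.
    split; [|split].
    - move=> x1 y1 [h|h] [h'|h']; left; apply: h1 => //; apply: N'N; by right.
    - move=> c x1 [h|h]; left; apply: h2 => //; apply: N'N; by right.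
    - move=> a x1 [h|h]; left; apply: h3 => //; apply: N'N; by right.
  have [n [a [c [hn ef]]]] := N'f.
  rewrite -[m']piK; set y := val m'.
  have -> : pi N y = pi N (y ** f).
    apply: pi_eq; apply: NNcl; apply: N0N; exact: N0R.
  rewrite ef !mulDr mulA mulZr !piD' piZ (pi0N (y ** n)); last exact: NM.
  rewrite add0r -!act_pi; apply: NsD; first exact: NsM.
  by apply: NsZ; apply: NsM.
have [F [FD [FZ [FM Fsurj]]]] := Hgen.2 _ act Hlm Hqc Hirr.
have [he _] := Hgen.
have eAe : inAe mul e e by exists e.
have Fe : F e = 0.
  have := FM e e eAe; rewrite he -[F e]piK act_pi => ->.
  apply: pi0N; apply: N0N; apply: N0T; exact: Te.
have [a [[b ->] Fa]] := Fsurj (pi N f).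
apply: Nf; apply: NclN; apply: pi_eq0; by rewrite -Fa FM // Fe -pi0 act_pi mul0r.
Qed.

Definition Dsp v (s : seq (V * V)) :=
  (isE v -> v = \sum_(p <- s) p.1 ** e ** p.2) /\ (~ isE v -> s = [::]).
Definition D v := epsilon (inhabits [::]) (Dsp v).
Lemma DP v : Dsp v (D v).
Proof.
apply: epsilon_spec; case: (classic (isE v)) => h.
  have [k ek] := h; have [s hs] := keyE k; exists s; split => // _; by rewrite ek.
by exists [::]; split.
Qed.

Definition uu v m := (nth (0, 0) (D v) m).1.
Definition ww v m := (nth (0, 0) (D v) m).2.
Definition al (i : V * nat) (b : V) := i.1 ** (uu i.1 i.2 ** b).
Definition ch (i : V * nat) (xi : V) := (e ** ww i.1 i.2) ** (i.1 ** xi).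

Lemma uw0 v m : (size (D v) <= m)%N -> uu v m = 0 /\ ww v m = 0.
Proof. by move=> h; rewrite /uu /ww nth_default. Qed.
Lemma uwE v m : ~ isE v -> uu v m = 0 /\ ww v m = 0.
Proof. by move=> h; apply: uw0; rewrite (DP v).2. Qed.

Definition sq (S : seq V) : seq (V * nat) :=
  [seq (v, m) | v <- S, m <- index_iota 0 (size (D v))].

Lemma sq_out S v m : (v, m) \notin sq S -> v \notin S \/ (uu v m = 0 /\ ww v m = 0).
Proof.
move=> H; case: (boolP (v \in S)) => vS; [right|by left].
apply: uw0; rewrite leqNgt; apply/negP => lt; move/negP: H; apply.
by apply/allpairsPdep; exists v, m; split => //; rewrite mem_index_iota.
Qed.

Lemma sq_uniq S : uniq S -> uniq (sq S).
Proof.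
move=> US; apply: allpairs_uniq_dep => // [v _|]; first exact: iota_uniq.
by move=> [v1 m1] [v2 m2] _ _ /= [-> ->].
Qed.

Lemma al_u0 v m b : uu v m = 0 -> al (v, m) b = 0.
Proof. by rewrite /al /= => ->; rewrite mul0l mul0r. Qed.
Lemma ch_w0 v m xi : ww v m = 0 -> ch (v, m) xi = 0.
Proof. by rewrite /ch /= => ->; rewrite mul0r mul0l. Qed.

Lemma lcs : left_coordinate_system mul e.
Proof.
have [he _] := Hgen.
exists ((V * nat)%type : eqType), al, ch; split; [|split; [|split]].
- move=> [v m]; split; [|split; [|split]].
  + by move=> _ [a ->]; exists (v ** (uu v m ** (e ** a))); rewrite /al /= !mulA.
  + by move=> b b' _ _; rewrite /al !mulDr.
  + by move=> c b _; rewrite /al !mulZr.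
  + by move=> b b' _ _; rewrite /al !mulA.
- move=> [v m]; split; [|split; [|split]].
  + by move=> _ [a ->]; exists (ww v m ** (v ** a)); rewrite /ch /= !mulA.
  + by move=> x y _ _; rewrite /ch !mulDr.
  + by move=> c x _; rewrite /ch !mulZr.
  + by move=> x b _ _; rewrite /ch !mulA.
- move=> xi _.
  have [S [US SE hS h0]] := left_dec xi.
  exists (sq S); split; [exact: sq_uniq | split].
  + move=> [v m] /sq_out [vS|[_ w0]]; last exact: ch_w0.
    case: (classic (isE v)) => hv; last by apply: ch_w0; have [] := uwE m hv.
    by rewrite /ch /= h0 // mul0r.
  + rewrite big_allpairs_dep /= {1}hS; apply: eq_big_seq => v vS.
    have ev := (DP v).1 (SE v vS).
    have -> : \sum_(m <- index_iota 0 (size (D v))) al (v, m) (ch (v, m) xi) =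
        v ** ((\sum_(m <- index_iota 0 (size (D v))) (uu v m ** e ** ww v m)) ** (v ** xi)).
      rewrite mul_suml mul_sumr; apply: eq_bigr => m _.
      by rewrite /al /ch /= !mulA.
    have <- : \sum_(p <- D v) p.1 ** e ** p.2 =
        \sum_(m <- index_iota 0 (size (D v))) (uu v m ** e ** ww v m).
      by rewrite (big_nth (0, 0)).
    by rewrite -ev !mulA !isE_idem //; apply: SE.
- move=> x.
  have [S1 [_ SE1 _ h1]] := left_dec x.
  have [S2 h2] := right_dec x.
  exists (sq (S1 ++ S2)) => -[v m] /sq_out [vS|[u0 w0]]; last first.
    by split=> [b _|xi _]; [rewrite al_u0 // mul0r | rewrite ch_w0].
  case: (classic (isE v)) => hv; last first.
    have [u0 w0] := uwE m hv.
    by split=> [b _|xi _]; [rewrite al_u0 // mul0r | rewrite ch_w0].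
  move: vS; rewrite mem_cat negb_or => /andP [v1 v2].
  split=> [b _|xi _].
    by rewrite /al /= mulA h2 // mul0l.
  by rewrite /ch /= [v ** _]mulA h1 // mul0l mul0r.
Qed.
End AUF.

Lemma sum_supp (I : eqType) (M : zmodType) (F : I -> M) (s t : seq I) :
  uniq s -> uniq t -> (forall i, i \notin s -> F i = 0) -> (forall i, i \notin t -> F i = 0) ->
  \sum_(i <- s) F i = \sum_(i <- t) F i.
Proof.
move=> us ut hs ht.
rewrite (bigID (fun i => i \in t)) /= [X in _ + X]big1 ?addr0; last by move=> i /ht.
rewrite [RHS](bigID (fun i => i \in s)) /= [X in _ + X]big1 ?addr0; last by move=> i /hs.
rewrite -(big_filter s (fun i => i \in t)) -(big_filter t (fun i => i \in s)); apply: perm_big; apply: uniq_perm; rewrite ?filter_uniq //.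
by move=> i; rewrite !mem_filter andbC.
Qed.

Lemma proj_of_lcs e : Defs.idempotent mul e -> left_coordinate_system mul e -> projective_Ae mul e.
Proof.
move=> he [I [al [ch [Hal [Hch [Hc Hd]]]]]].
move=> NT PT ractN ractP HN HP g [gD [gZ gR]] gsurj h [hD [hZ hR]].
have [_ [rM [rDb [rDn [rZn rZb]]]]] := HN.
have [_ [pM [pDb [pDn [pZn pZb]]]]] := HP.
have B0 : inB mul e 0 by exists 0; rewrite !mul0r mul0l.
have Be : inB mul e e by exists e; rewrite he he.
have Ae0 : inAe mul e 0 by exists 0; rewrite mul0l.
have AeD x y : inAe mul e x -> inAe mul e y -> inAe mul e (x + y).
  by move=> [a ->] [b ->]; exists (a + b); rewrite mulDl.
have eB b : inB mul e b -> e ** b = b by move=> [a ->]; rewrite !mulA he.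
have r0 n : ractN n 0 = 0.
  have H := rDb n 0 0 B0 B0; rewrite addr0 in H.
  by apply: (addrI (ractN n 0)); rewrite addr0 -H.
have rN0 b : inB mul e b -> ractN 0 b = 0.
  move=> hb; have H := rDn 0 0 b hb; rewrite addr0 in H.
  by apply: (addrI (ractN 0 b)); rewrite addr0 -H.
have rsum (r : seq I) (F : I -> NT) b : inB mul e b ->
    ractN (\sum_(i <- r) F i) b = \sum_(i <- r) ractN (F i) b.
  move=> hb; elim: r => [|i r IH]; first by rewrite !big_nil rN0.
  by rewrite !big_cons rDn // IH.
have g0 : g 0 = 0.
  have H := gD 0 0; rewrite addr0 in H.
  by apply: (addrI (g 0)); rewrite addr0 -H.
have gsum (r : seq I) (F : I -> NT) : g (\sum_(i <- r) F i) = \sum_(i <- r) g (F i).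
  by elim: r => [|i r IH]; rewrite ?big_nil ?g0 // !big_cons gD IH.
have h0 : h 0 = 0.
  have H := hD 0 0 Ae0 Ae0; rewrite addr0 in H.
  by apply: (addrI (h 0)); rewrite addr0 -H.
have AeS (r : seq I) (G : I -> V) : (forall i, inAe mul e (G i)) -> inAe mul e (\sum_(i <- r) G i).
  by move=> hG; elim: r => [|i r IH]; rewrite ?big_nil // big_cons; apply: AeD.
have hsum (r : seq I) (G : I -> V) : (forall i, inAe mul e (G i)) ->
    h (\sum_(i <- r) G i) = \sum_(i <- r) h (G i).
  move=> hG; elim: r => [|i r IH]; rewrite ?big_nil ?h0 // !big_cons hD ?IH //.
  exact: AeS.
pose n_ i := epsilon (inhabits 0) (fun n => g n = h (al i e)).
have nP i : g (n_ i) = h (al i e) by apply: (epsilon_spec (inhabits 0) (fun n => g n = h (al i e))); apply: gsurj.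
pose spec xi (s : seq I) := uniq s /\ (forall i, i \notin s -> ch i xi = 0) /\
  xi = \sum_(i <- s) al i (ch i xi).
pose supp xi := epsilon (inhabits [::]) (spec xi).
have suppP xi : inAe mul e xi -> spec xi (supp xi).
  by move=> hx; apply: epsilon_spec; apply: Hc.
have chB i := (Hch i).1.
have chD i := (Hch i).2.1.
have chZ i := (Hch i).2.2.1.
have chM i := (Hch i).2.2.2.
have alA i := (Hal i).1.
have alM i := (Hal i).2.2.2.
pose k xi := \sum_(i <- supp xi) ractN (n_ i) (ch i xi).
exists k; split; [split; [|split]|].
- move=> x y hx hy.
  have hxy := AeD _ _ hx hy.
  have [u1 [z1 _]] := suppP x hx.
  have [u2 [z2 _]] := suppP y hy.
  have [u3 [z3 _]] := suppP _ hxy.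
  set U := undup (supp x ++ supp y ++ supp (x + y)).
  have uU : uniq U by apply: undup_uniq.
  have inU i : i \notin U -> [/\ i \notin supp x, i \notin supp y & i \notin supp (x + y)].
    by rewrite mem_undup !mem_cat !negb_or => /andP [-> /andP [-> ->]].
  rewrite /k (@sum_supp _ _ _ _ U) //; last first.
  + by move=> i /inU [_ _ /z3 ->].
  + by move=> i /z3 ->.
  rewrite (eq_bigr (fun i => ractN (n_ i) (ch i x) + ractN (n_ i) (ch i y))); last first.
    by move=> i _; rewrite chD // rDb //; apply: chB.
  rewrite big_split /=; congr (_ + _); apply: sum_supp => //.
  + by move=> i /inU [/z1 -> _ _].
  + by move=> i /z1 ->.
  + by move=> i /inU [_ /z2 -> _].
  + by move=> i /z2 ->.
- move=> c x hx.
  have hcx : inAe mul e (c *: x) by case: hx => a ->; exists (c *: a); rewrite mulZl.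
  have [u1 [z1 _]] := suppP x hx.
  have [u3 [z3 _]] := suppP _ hcx.
  rewrite /k (@sum_supp _ _ _ _ (supp x)) //; last first.
  + by move=> i /z1 hz; rewrite chZ // hz scaler0.
  + by move=> i /z3 ->.
  rewrite scaler_sumr; apply: eq_bigr => i _.
  by rewrite chZ // rZb //; apply: chB.
- move=> x b hx hb.
  have hxb : inAe mul e (x ** b).
    by case: hx => a ->; case: hb => a' ->; exists (a ** e ** e ** a'); rewrite !mulA.
  have [u1 [z1 _]] := suppP x hx.
  have [u3 [z3 _]] := suppP _ hxb.
  rewrite /k rsum // (@sum_supp _ _ _ _ (supp x)) //; last first.
  + by move=> i /z1 hz; rewrite chM // hz mul0l.
  + by move=> i /z3 ->.
  apply: eq_bigr => i _.
  by rewrite chM // rM //; apply: chB.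
- move=> x hx.
  have [_ [_ ex]] := suppP x hx.
  rewrite /k gsum [in RHS]ex hsum; last by move=> i; apply: alA; apply: chB.
  apply: eq_bigr => i _.
  have hB := chB i x hx.
  rewrite gR ?nP // -hR //; last exact: alA.
  congr (h _); rewrite -{2}(eB _ hB); symmetry; exact: alM.
Qed.
End Alg.

Theorem theorem6p5 (R : realType) (A : lmodType R[i]) (mul : A -> A -> A) :
  is_algebra mul -> strongly_AUF mul ->
  forall e : A, generating mul e ->
    left_coordinate_system mul e /\ projective_Ae mul e.
Proof.
move=> Halg [[J [E [Eidem [Eorth [_ Edec]]]]] _] e Hgen.
have hl := lcs Halg Eidem Eorth Edec Hgen.
split => //; apply: proj_of_lcs => //; exact: Hgen.1.
Qed.
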